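(* Let $n\ge1$ and $1\le k\le n$ be integers, let $d$ be a positive divisor of $n$, and let $\omega$ be a primitive $d$-th root of unity. Let $$f_{n,k}(q)=\frac{1}{[2n-k]_q}\begin{bmatrix} n\\ k-1\end{bmatrix}_q\begin{bmatrix} 3n-2k-1\\ n-k\end{bmatrix}_q$$ and for integers $N,K$ let $f_{N,K}=\frac{1}{2N-K}\binom{N}{K-1}\binom{3N-2K-1}{N-K}$. Then: (1) If $d=1$, then $f_{n,k}(\omega)=f_{n,k}$. (2) If $d\ge2$ and $d\mid k$, then with $n'=n/d$, $k'=k/d$ we have $f_{n,k}(\omega)=(n'-k'+1)f_{n',k'}$. (3) If $d=2$ and $k$ is odd, then with $n'=n/2$, $k'=(k+1)/2$ we have $f_{n,k}(\omega)=\binom{n'}{k'-1}\binom{3n'-2k'}{n'-k'}$. (4) In all other cases $f_{n,k}(\omega)=0$.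
   Context: $[m]_q=1+q+\dots+q^{m-1}=\frac{1-q^m}{1-q}$, $[m]_q!=[m]_q[m-1]_q\cdots[1]_q$, $\begin{bmatrix} m\\ j\end{bmatrix}_q=\frac{[m]_q!}{[j]_q![m-j]_q!}$. The value $f_{n,k}(\omega)$ is the value at $q=\omega$ of the rational function $f_{n,k}(q)$ after cancellation (it has no pole at $\omega$), i.e. its limit as $q\to\omega$. *)

(* Defs.v *)
From HB Require Import structures.
From mathcomp Require Import all_boot all_order all_algebra all_field.
Set Implicit Arguments. Unset Strict Implicit. Unset Printing Implicit Defensive.
Import Order.TTheory GRing.Theory Num.Theory.
Local Open Scope ring_scope.

Notation qpoly := {poly algC}.
Notation qrat := {fraction {poly algC}}.
Notation "x %:Fr" := (@FracField.tofrac _ x) (at level 2, format "x %:Fr").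

Definition qint (m : nat) : qpoly := \sum_(i < m) 'X^i.
Definition qfact (m : nat) : qpoly := \prod_(i < m) qint i.+1.
Definition qbinom (m j : nat) : qrat :=
  if (j <= m)%N then (qfact m)%:Fr / ((qfact j)%:Fr * (qfact (m - j))%:Fr)
  else 0.

Definition fq (n k : nat) : qrat :=
  ((qint (2 * n - k))%:Fr)^-1 * qbinom n (k - 1) * qbinom (3 * n - 2 * k - 1) (n - k).

Definition fN (N K : nat) : algC :=
  (((2 * N - K)%N)%:R)^-1 * ('C(N, K - 1))%:R * ('C(3 * N - 2 * K - 1, N - K))%:R.

(* "the value at q = x of the rational function f (after cancellation) is v":
   f = P/Q with polynomials P, Q, Q(x) <> 0 and v = P(x)/Q(x). *)
Definition value_at (f : qrat) (x v : algC) : Prop :=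
  exists P Q : qpoly, Q.[x] != 0 /\ f = P%:Fr / Q%:Fr /\ v = P.[x] / Q.[x].

(* Main.v *)
Require Import Defs.
From HB Require Import structures.
From mathcomp Require Import all_boot all_order all_algebra all_field.
From mathcomp Require Import ring zify.
Import Order.TTheory GRing.Theory Num.Theory.
Local Open Scope ring_scope.
Set Implicit Arguments. Unset Strict Implicit.

Definition ap (i : nat) : {poly algC} := 1 - 'X^i.
Definition Ap (m : nat) : {poly algC} := \prod_(i < m) ap i.+1.
Definition Nw (w : algC) (r : nat) : algC := \prod_(i < r) (1 - w ^+ i.+1).
Definition Cp (d : nat) (w : algC) : {poly algC} := (Nw w d.-1)%:P * (1 - 'X^d).
Definition ovp d w (p : {poly algC}) (e : nat) (v : algC) :=
  exists B : {poly algC}, p = Cp d w ^+ e * B /\ B.[w] = v.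

Lemma ovp_mul d (w : algC) p q e1 e2 v1 v2 :
  ovp d w p e1 v1 -> ovp d w q e2 v2 -> ovp d w (p * q) (e1 + e2) (v1 * v2).
Proof.
move=> [B1 [-> <-]] [B2 [-> <-]]; exists (B1 * B2); split; last by rewrite hornerM.
by rewrite exprD; ring.
Qed.

Lemma ovp_prod d (w : algC) r (F : nat -> {poly algC}) (v : nat -> algC) :
  (forall i, (i < r)%N -> ovp d w (F i) 0 (v i)) ->
  ovp d w (\prod_(i < r) F i) 0 (\prod_(i < r) v i).
Proof.
elim: r => [|r IH] H.
  by rewrite !big_ord0; exists 1; rewrite expr0 mul1r hornerC.
rewrite !big_ord_recr /=; rewrite -[0%N]/(0 + 0)%N.
apply: ovp_mul; last exact: H.
by apply: IH => i Hi; apply: H; lia.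
Qed.

Lemma wpow d (w : algC) q r : d.-primitive_root w -> w ^+ (d * q + r)%N = w ^+ r.
Proof.
by move=> Hw; rewrite exprD exprM (prim_expr_order Hw) expr1n mul1r.
Qed.

Lemma w1_neq0 d (w : algC) r : d.-primitive_root w -> (0 < r < d)%N -> 1 - w ^+ r != 0.
Proof.
move=> Hw /andP[H0 H1]; rewrite subr_eq0 eq_sym -(prim_order_dvd Hw).
by rewrite gtnNdvd.
Qed.

Lemma Nw_neq0 d (w : algC) r : d.-primitive_root w -> (r < d)%N -> Nw w r != 0.
Proof.
move=> Hw Hr; apply/prodf_neq0 => i _ /=; apply: (@w1_neq0 d w i.+1 Hw).
by rewrite ltn0Sn /=; apply: leq_ltn_trans Hr; rewrite ltn_ord.
Qed.

Lemma ovp_nd d (w : algC) m q r : d.-primitive_root w -> m = (d * q + r)%N -> (0 < r < d)%N ->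
  ovp d w (ap m) 0 (1 - w ^+ r).
Proof.
move=> Hw -> _; exists (ap (d * q + r)); rewrite expr0 mul1r; split => //.
by rewrite /ap !hornerE wpow.
Qed.

Lemma ovp_d d (w : algC) m j : (0 < d)%N -> d.-primitive_root w -> m = (d * j)%N ->
  ovp d w (ap m) 1 (j%:R / Nw w d.-1).
Proof.
move=> d0 Hw ->.
have T0 : Nw w d.-1 != 0 by apply: Nw_neq0 Hw _; rewrite prednK.
exists ((Nw w d.-1)^-1%:P * \sum_(t < j) ('X^d) ^+ t); split.
  rewrite expr1 /Cp /ap.
  have -> : (Nw w d.-1)%:P * (1 - 'X^d) * ((Nw w d.-1)^-1%:P * \sum_(t < j) 'X^d ^+ t)
    = (Nw w d.-1 * (Nw w d.-1)^-1)%:P * ((1 - 'X^d) * \sum_(t < j) 'X^d ^+ t).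
    by rewrite polyCM; ring.
  rewrite mulfV // mul1r exprM.
  have := subrX1 ('X^d : {poly algC}) j => H.
  by rewrite -opprB H -mulNr opprB.
rewrite hornerM hornerC horner_sum mulrC.
congr (_ * _).
rewrite (eq_bigr (fun _ => 1)); last first.
  by move=> i _; rewrite -exprM hornerXn exprM (prim_expr_order Hw) expr1n.
by rewrite sumr_const card_ord.
Qed.
Lemma Ap_split m r : Ap (m + r) = Ap m * \prod_(i < r) ap (m + i).+1.
Proof. by rewrite /Ap big_split_ord. Qed.

Lemma ovp_A0 d (w : algC) q : (0 < d)%N -> d.-primitive_root w ->
  (forall r, (r < d)%N -> ovp d w (Ap (d * q + r)) q ((q`!)%:R * Nw w r)).
Proof.
move=> d0 Hw.
have ext : forall q, ovp d w (Ap (d * q)) q ((q`!)%:R) ->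
    forall r, (r < d)%N -> ovp d w (Ap (d * q + r)) q ((q`!)%:R * Nw w r).
  move=> q' Hq r Hr; rewrite Ap_split.
  have Hp : ovp d w (\prod_(i < r) ap (d * q' + i)%N.+1) 0 (Nw w r).
    rewrite /Nw; apply: (@ovp_prod d w r (fun i => ap (d * q' + i)%N.+1) (fun i => 1 - w ^+ i.+1)) => i Hi.
    apply: (@ovp_nd d w _ q' _ Hw); first by rewrite addnS.
    by apply/andP; split => //; lia.
  by have := ovp_mul Hq Hp; rewrite addn0.
apply: (ext q); elim: q => [|q IH].
  by rewrite muln0 /Ap big_ord0; exists 1; rewrite expr0 mul1r hornerC.
have -> : (d * q.+1 = (d * q + d.-1).+1)%N by rewrite mulnS; lia.
rewrite /Ap big_ord_recr /= -/(Ap _).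
have -> : ((q.+1)`!)%:R = (q`!)%:R * Nw w d.-1 * ((q.+1)%:R / Nw w d.-1) :> algC.
  have T0 : Nw w d.-1 != 0 by apply: Nw_neq0 Hw _; rewrite prednK.
  by rewrite factS natrM mulrC -mulrA [_ * (_ / _)]mulrC divfK.
have H1 : ovp d w (Ap (d*q + d.-1)) q (q`!%:R * Nw w d.-1) by apply: ext => //; rewrite prednK.
have H2 : ovp d w (ap (d*q + d.-1).+1) 1 ((q.+1)%:R / Nw w d.-1).
  by apply: ovp_d => //; rewrite mulnS; lia.
by have := ovp_mul H1 H2; rewrite addn1.
Qed.

Lemma ovp_A d (w : algC) m q r : (0 < d)%N -> d.-primitive_root w ->
  m = (d * q + r)%N -> (r < d)%N -> ovp d w (Ap m) q ((q`!)%:R * Nw w r).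
Proof. by move=> d0 Hw -> Hr; apply: ovp_A0. Qed.
Lemma qint_ap m : qint m * ap 1 = ap m.
Proof.
rewrite /qint /ap expr1 mulrC.
have := subrX1 ('X : {poly algC}) m => H.
by rewrite -opprB mulNr -H opprB.
Qed.

Lemma qfact_Ap m : qfact m * ap 1 ^+ m = Ap m.
Proof.
elim: m => [|m IH]; first by rewrite /qfact /Ap !big_ord0 mul1r.
rewrite /qfact /Ap !big_ord_recr /= -/(qfact m) -/(Ap m) -IH exprS -(qint_ap m.+1).
by ring.
Qed.

Lemma ap_neq0 i : (0 < i)%N -> ap i != 0.
Proof.
move=> Hi; apply/negP => /eqP H.
have := congr1 (horner^~ 0) H; rewrite /ap !hornerE expr0n /=.
by rewrite eqn0Ngt Hi subr0 => /eqP; rewrite oner_eq0.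
Qed.

Lemma Ap_neq0 m : Ap m != 0.
Proof. by apply/prodf_neq0 => i _; apply: ap_neq0. Qed.

Lemma qint_fr m : (qint m)%:Fr = (ap m)%:Fr / (ap 1)%:Fr.
Proof.
have H1 : (ap 1)%:Fr != 0 by rewrite tofrac_eq0 ap_neq0.
by rewrite -qint_ap tofracM mulfK.
Qed.

Lemma qfact_fr m : (qfact m)%:Fr = (Ap m)%:Fr / ((ap 1)%:Fr ^+ m).
Proof.
have H1 : (ap 1)%:Fr ^+ m != 0 by rewrite expf_neq0 // tofrac_eq0 ap_neq0.
by rewrite -qfact_Ap tofracM tofracXn mulfK.
Qed.

Lemma frac_aux1 (F : fieldType) (A B C x y : F) : x != 0 -> y != 0 -> B != 0 -> C != 0 ->
  (A / (x * y)) / ((B / x) * (C / y)) = A / (B * C).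
Proof. by move=> *; field; apply/and4P; split. Qed.

Lemma qbinom_fr m j : (j <= m)%N ->
  qbinom m j = (Ap m)%:Fr / ((Ap j)%:Fr * (Ap (m - j))%:Fr).
Proof.
move=> Hj; rewrite /qbinom Hj !qfact_fr.
have Hx : (ap 1)%:Fr != 0 by rewrite tofrac_eq0 ap_neq0.
have E : (ap 1)%:Fr ^+ m = (ap 1)%:Fr ^+ j * (ap 1)%:Fr ^+ (m - j).
  by rewrite -exprD (subnKC Hj).
have A1 : (Ap j)%:Fr != 0 by rewrite tofrac_eq0 Ap_neq0.
have A2 : (Ap (m - j))%:Fr != 0 by rewrite tofrac_eq0 Ap_neq0.
have X1 : (ap 1)%:Fr ^+ j != 0.
  exact: (expf_neq0 j Hx).
have X2 : (ap 1)%:Fr ^+ (m - j) != 0.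
  exact: (expf_neq0 (m - j) Hx).
rewrite E. exact: (@frac_aux1 _ (Ap m)%:Fr _ _ _ _ X1 X2 A1 A2).
Qed.

Definition Num n k : {poly algC} := ap 1 * Ap n * Ap (3 * n - 2 * k - 1)%N.
Definition Den n k : {poly algC} :=
  ap (2 * n - k)%N * Ap (k - 1)%N * Ap (n - k + 1)%N * Ap (n - k)%N * Ap (2 * n - k - 1)%N.

Lemma frac_aux2 (F : fieldType) (a1 b An A3 Ak An1 Ank A2 : F) :
  a1 != 0 -> b != 0 -> Ak != 0 -> An1 != 0 -> Ank != 0 -> A2 != 0 ->
  (b / a1)^-1 * (An / (Ak * An1)) * (A3 / (Ank * A2)) =
  (a1 * An * A3) / (b * Ak * An1 * Ank * A2).
Proof. by move=> *; field; repeat (apply/andP; split). Qed.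

Lemma fq_eq n k : (1 <= k <= n)%N -> fq n k = (Num n k)%:Fr / (Den n k)%:Fr.
Proof.
move=> /andP[k1 kn].
have H1 : (k - 1 <= n)%N by lia.
have H2 : (n - k <= 3 * n - 2 * k - 1)%N by lia.
rewrite /fq qint_fr (qbinom_fr H1) (qbinom_fr H2).
have -> : (n - (k - 1) = n - k + 1)%N by lia.
have -> : (3 * n - 2 * k - 1 - (n - k) = 2 * n - k - 1)%N by lia.
rewrite /Num /Den !tofracM.
have Hx : (ap 1)%:Fr != 0 by rewrite tofrac_eq0 ap_neq0.
have Hy : (ap (2 * n - k))%:Fr != 0 by rewrite tofrac_eq0 ap_neq0 //; lia.
have A1 : forall m, (Ap m)%:Fr != 0 by move=> m; rewrite tofrac_eq0 Ap_neq0.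
exact: (@frac_aux2 _ _ _ (Ap n)%:Fr (Ap (3 * n - 2 * k - 1))%:Fr _ _ _ _ Hx Hy (A1 _) (A1 _) (A1 _) (A1 _)).
Qed.
Lemma frac_aux3 (F : fieldType) (x c y b : F) : c != 0 -> b != 0 ->
  (x * c * y) / (c * b) = (x * y) / b.
Proof. by move=> *; field; apply/andP; split. Qed.

Lemma Cp_w d (w : algC) : d.-primitive_root w -> (Cp d w).[w] = 0.
Proof. by move=> Hw; rewrite /Cp !hornerE (prim_expr_order Hw) subrr mulr0. Qed.

Lemma Den_neq0 n k : (k <= n)%N -> (0 < n)%N -> Den n k != 0.
Proof.
move=> kn n0; rewrite /Den !mulf_neq0 ?Ap_neq0 // ap_neq0 //; lia.
Qed.

Lemma final d (w : algC) n k eN eD vN vD : d.-primitive_root w -> (1 <= k <= n)%N ->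
  ovp d w (Num n k) eN vN -> ovp d w (Den n k) eD vD -> vD != 0 -> (eD <= eN)%N ->
  value_at (fq n k) w (if eD == eN then vN / vD else 0).
Proof.
move=> Hw Hk [BN [HN HvN]] [BD [HD HvD]] vD0 Hle.
have D0 := Den_neq0 (n := n) (k := k) ltac:(lia) ltac:(lia).
rewrite HD in D0.
have C0 : Cp d w ^+ eD != 0 by move: D0; rewrite mulf_eq0 negb_or => /andP[].
have B0 : BD != 0 by move: D0; rewrite mulf_eq0 negb_or => /andP[].
have HN' : Num n k = Cp d w ^+ (eN - eD) * Cp d w ^+ eD * BN by rewrite -exprD subnK.
rewrite (fq_eq Hk) HN' HD.
exists (Cp d w ^+ (eN - eD) * BN), BD; split; first by rewrite HvD.
split.
  rewrite !tofracM.
  have C0' : (Cp d w ^+ eD)%:Fr != 0 by rewrite tofrac_eq0.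
  have B0' : BD%:Fr != 0 by rewrite tofrac_eq0.
  exact: (@frac_aux3 _ (Cp d w ^+ (eN - eD))%:Fr _ BN%:Fr _ C0' B0').
rewrite hornerM horner_exp Cp_w // HvN HvD.
case: eqP => [->|Hne]; first by rewrite subnn expr0 mul1r.
have -> : (eN - eD = (eN - eD).-1.+1)%N by lia.
by rewrite expr0n mul0r mul0r.
Qed.
Lemma ovp_Num d (w : algC) n k e1 e2 e3 v1 v2 v3 :
  ovp d w (ap 1) e1 v1 -> ovp d w (Ap n) e2 v2 -> ovp d w (Ap (3 * n - 2 * k - 1)%N) e3 v3 ->
  ovp d w (Num n k) (e1 + e2 + e3) (v1 * v2 * v3).
Proof. by move=> H1 H2 H3; apply: ovp_mul => //; apply: ovp_mul. Qed.

Lemma ovp_Den d (w : algC) n k e1 e2 e3 e4 e5 v1 v2 v3 v4 v5 :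
  ovp d w (ap (2 * n - k)%N) e1 v1 -> ovp d w (Ap (k - 1)%N) e2 v2 ->
  ovp d w (Ap (n - k + 1)%N) e3 v3 -> ovp d w (Ap (n - k)%N) e4 v4 ->
  ovp d w (Ap (2 * n - k - 1)%N) e5 v5 ->
  ovp d w (Den n k) (e1 + e2 + e3 + e4 + e5) (v1 * v2 * v3 * v4 * v5).
Proof.
by move=> H1 H2 H3 H4 H5; apply: ovp_mul => //; apply: ovp_mul => //;
  apply: ovp_mul => //; apply: ovp_mul.
Qed.

Lemma value_at_eq (f : qrat) x v u : value_at f x v -> v = u -> value_at f x u.
Proof. by move=> H <-. Qed.

Lemma fact_neq0 m : (m`!)%:R != 0 :> algC.
Proof. by rewrite pnatr_eq0 -lt0n fact_gt0. Qed.

Lemma binR n m : (m <= n)%N ->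
  ('C(n, m))%:R = (n`!)%:R / ((m`!)%:R * ((n - m)`!)%:R) :> algC.
Proof.
move=> H; rewrite -(bin_fact H) !natrM.
have := fact_neq0 m; have := fact_neq0 (n - m) => *.
by field; apply/andP; split.
Qed.

Lemma Nw0 (w : algC) : Nw w 0 = 1.
Proof. by rewrite /Nw big_ord0. Qed.

Lemma Nw1 (w : algC) : Nw w 1 = 1 - w.
Proof. by rewrite /Nw big_ord1 expr1. Qed.

Lemma case1 n k (w : algC) : (1 <= n)%N -> (1 <= k <= n)%N -> 1.-primitive_root w ->
  value_at (fq n k) w (fN n k).
Proof.
move=> n1 Hk Hw; have /andP[k1 kn] := Hk.
have d0 : (0 < 1)%N by [].
eapply value_at_eq.
  eapply (final Hw Hk).
  - eapply ovp_Num.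
    + by apply: (@ovp_d 1 w _ 1 d0 Hw).
    + by apply: (@ovp_A 1 w _ n 0 d0 Hw); lia.
    + by apply: (@ovp_A 1 w _ (3 * n - 2 * k - 1) 0 d0 Hw); lia.
  - eapply ovp_Den.
    + by apply: (@ovp_d 1 w _ (2 * n - k) d0 Hw); lia.
    + by apply: (@ovp_A 1 w _ (k - 1) 0 d0 Hw); lia.
    + by apply: (@ovp_A 1 w _ (n - k + 1) 0 d0 Hw); lia.
    + by apply: (@ovp_A 1 w _ (n - k) 0 d0 Hw); lia.
    + by apply: (@ovp_A 1 w _ (2 * n - k - 1) 0 d0 Hw); lia.
  - rewrite /= !Nw0 !mulr1 divr1 !mulf_neq0 ?fact_neq0 // pnatr_eq0; lia.
  - lia.
have -> : (1 + (k - 1) + (n - k + 1) + (n - k) + (2 * n - k - 1) ==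
  1 + n + (3 * n - 2 * k - 1))%N = true by apply/eqP; lia.
rewrite /= !Nw0 !mulr1 !divr1 /fN (@binR n (k - 1)); last by lia.
rewrite (@binR (3 * n - 2 * k - 1) (n - k)); last by lia.
have -> : (n - (k - 1) = n - k + 1)%N by lia.
have -> : (3 * n - 2 * k - 1 - (n - k) = 2 * n - k - 1)%N by lia.
have H2 : ((2 * n - k)%N)%:R != 0 :> algC by rewrite pnatr_eq0; lia.
have := fact_neq0 (k - 1); have := fact_neq0 (n - k + 1); have := fact_neq0 (n - k);
have := fact_neq0 (2 * n - k - 1) => *.
by field; repeat (apply/andP; split).
Qed.
Lemma case2 n k d (w : algC) : (1 <= n)%N -> (1 <= k <= n)%N -> (2 <= d)%N ->
  (d %| n)%N -> (d %| k)%N -> d.-primitive_root w ->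
  value_at (fq n k) w (((n %/ d - k %/ d + 1)%N)%:R * fN (n %/ d) (k %/ d)).
Proof.
move=> n1 Hk d2 /dvdnP[n' En] /dvdnP[k' Ek] Hw; have /andP[k1 kn] := Hk.
have d0 : (0 < d)%N by lia.
have -> : (n %/ d = n')%N by rewrite En mulnK.
have -> : (k %/ d = k')%N by rewrite Ek mulnK.
have k'1 : (1 <= k')%N by rewrite lt0n; apply/eqP => K; move: k1; rewrite Ek K.
have k'n : (k' <= n')%N by move: kn; rewrite En Ek leq_pmul2r.
have Td : (d.-1 < d)%N by lia.
have T0 := Nw_neq0 Hw Td.
have w0 : 1 - w != 0 by rewrite -Nw1 (Nw_neq0 Hw); lia.
eapply value_at_eq.
  eapply (final Hw Hk).
  - eapply ovp_Num.
    + by apply: (@ovp_nd d w 1 0 1 Hw); lia.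
    + by apply: (@ovp_A d w _ n' 0 d0 Hw); nia.
    + by apply: (@ovp_A d w _ (3 * n' - 2 * k' - 1) d.-1 d0 Hw); nia.
  - eapply ovp_Den.
    + by apply: (@ovp_d d w _ (2 * n' - k') d0 Hw); nia.
    + by apply: (@ovp_A d w _ (k' - 1) d.-1 d0 Hw); nia.
    + by apply: (@ovp_A d w _ (n' - k') 1 d0 Hw); nia.
    + by apply: (@ovp_A d w _ (n' - k') 0 d0 Hw); nia.
    + by apply: (@ovp_A d w _ (2 * n' - k' - 1) d.-1 d0 Hw); nia.
  - rewrite /= !Nw0 Nw1 !mulr1 !mulf_neq0 ?fact_neq0 ?invr_eq0 // pnatr_eq0; lia.
  - lia.
have -> : (1 + (k' - 1) + (n' - k') + (n' - k') + (2 * n' - k' - 1) ==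
  0 + n' + (3 * n' - 2 * k' - 1))%N = true by apply/eqP; lia.
rewrite /= !Nw0 Nw1 !mulr1 /fN (@binR n' (k' - 1)); last by lia.
rewrite (@binR (3 * n' - 2 * k' - 1) (n' - k')); last by lia.
have -> : (n' - (k' - 1) = (n' - k').+1)%N by lia.
have -> : (3 * n' - 2 * k' - 1 - (n' - k') = 2 * n' - k' - 1)%N by lia.
have -> : (n' - k' + 1 = (n' - k').+1)%N by lia.
rewrite factS natrM.
have H2 : ((2 * n' - k')%N)%:R != 0 :> algC by rewrite pnatr_eq0; lia.
have H3 : 1 + ((n' - k')%N)%:R != 0 :> algC by rewrite nat1r pnatr_eq0.
have := fact_neq0 (k' - 1); have := fact_neq0 (n' - k');
have := fact_neq0 (2 * n' - k' - 1) => *.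
by field; repeat (apply/andP; split).
Qed.
Lemma case3 n k (w : algC) : (1 <= n)%N -> (1 <= k <= n)%N -> (2 %| n)%N ->
  2.-primitive_root w -> odd k ->
  value_at (fq n k) w
    (('C(n %/ 2, (k + 1) %/ 2 - 1))%:R *
     ('C(3 * (n %/ 2) - 2 * ((k + 1) %/ 2), n %/ 2 - (k + 1) %/ 2))%:R).
Proof.
move=> n1 Hk /dvdnP[n' En] Hw Hodd; have /andP[k1 kn] := Hk.
have d0 : (0 < 2)%N by [].
set k0 := k./2.
have Ek : k = (2 * k0 + 1)%N.
  by move: (odd_double_half k); rewrite Hodd -muln2 /k0 => E; lia.
have -> : (n %/ 2 = n')%N by rewrite En mulnK.
have -> : ((k + 1) %/ 2 = k0 + 1)%N by rewrite Ek -addnA -[(1 + 1)%N]/(2 * 1)%N -mulnDr mulKn.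
have k0n : (k0 + 1 <= n')%N by lia.
have w0 : 1 - w != 0 by rewrite -Nw1 (Nw_neq0 Hw).
eapply value_at_eq.
  eapply (final Hw Hk).
  - eapply ovp_Num.
    + by apply: (@ovp_nd 2 w 1 0 1 Hw).
    + by apply: (@ovp_A 2 w _ n' 0 d0 Hw); lia.
    + by apply: (@ovp_A 2 w _ (3 * n' - 2 * k0 - 2) 1 d0 Hw); lia.
  - eapply ovp_Den.
    + by apply: (@ovp_nd 2 w _ (2 * n' - k0 - 1) 1 Hw); lia.
    + by apply: (@ovp_A 2 w _ k0 0 d0 Hw); lia.
    + by apply: (@ovp_A 2 w _ (n' - k0) 0 d0 Hw); lia.
    + by apply: (@ovp_A 2 w _ (n' - k0 - 1) 1 d0 Hw); lia.
    + by apply: (@ovp_A 2 w _ (2 * n' - k0 - 1) 0 d0 Hw); lia.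
  - rewrite /= !Nw0 Nw1 !mulr1 expr1 !mulf_neq0 ?fact_neq0 //.
  - lia.
have -> : (0 + k0 + (n' - k0) + (n' - k0 - 1) + (2 * n' - k0 - 1) ==
  0 + n' + (3 * n' - 2 * k0 - 2))%N = true by apply/eqP; lia.
have -> : (k0 + 1 - 1 = k0)%N by lia.
have -> : (3 * n' - 2 * (k0 + 1) = 3 * n' - 2 * k0 - 2)%N by lia.
have -> : (n' - (k0 + 1) = n' - k0 - 1)%N by lia.
rewrite /= !Nw0 Nw1 !mulr1 expr1 (@binR n' k0); last by lia.
rewrite (@binR (3 * n' - 2 * k0 - 2) (n' - k0 - 1)); last by lia.
have -> : (3 * n' - 2 * k0 - 2 - (n' - k0 - 1) = 2 * n' - k0 - 1)%N by lia.
have := fact_neq0 k0; have := fact_neq0 (n' - k0); have := fact_neq0 (n' - k0 - 1);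
have := fact_neq0 (2 * n' - k0 - 1) => *.
by field; repeat (apply/andP; split).
Qed.
Lemma case4 n k d (w : algC) : (1 <= n)%N -> (1 <= k <= n)%N -> (3 <= d)%N ->
  (d %| n)%N -> ~~ (d %| k)%N -> d.-primitive_root w -> value_at (fq n k) w 0.
Proof.
move=> n1 Hk d3 /dvdnP[n' En] ndk Hw; have /andP[k1 kn] := Hk.
have d0 : (0 < d)%N by lia.
set k' := (k %/ d)%N; set s := (k %% d)%N.
have Ek : k = (k' * d + s)%N by rewrite /k' /s -divn_eq.
have s0 : (0 < s)%N by rewrite lt0n; exact: ndk.
have sd : (s < d)%N by rewrite /s ltn_pmod.
clearbody k' s.
have k'n : (k' < n')%N by nia.
have HD : exists eD vD, ovp d w (Den n k) eD vD /\ vD != 0 /\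
    (eD <= 4 * n' - 2 * k' - 2)%N /\ ((2 <= s)%N -> (eD <= 4 * n' - 2 * k' - 3)%N).
  case: (boolP (s == 1%N)) => [/eqP s1|sn1].
    eexists; eexists; split; last split.
    - eapply ovp_Den.
      + by apply: (@ovp_nd d w _ (2 * n' - k' - 1) (d - 1) Hw); nia.
      + by apply: (@ovp_A d w _ k' 0 d0 Hw); nia.
      + by apply: (@ovp_A d w _ (n' - k') 0 d0 Hw); nia.
      + by apply: (@ovp_A d w _ (n' - k' - 1) (d - 1) d0 Hw); nia.
      + by apply: (@ovp_A d w _ (2 * n' - k' - 1) (d - 2) d0 Hw); nia.
    - by rewrite !mulf_neq0 ?fact_neq0 ?(w1_neq0 Hw) ?(Nw_neq0 Hw) //; lia.
    - split; lia.
  eexists; eexists; split; last split.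
  - eapply ovp_Den.
    + by apply: (@ovp_nd d w _ (2 * n' - k' - 1) (d - s) Hw); nia.
    + by apply: (@ovp_A d w _ k' (s - 1) d0 Hw); nia.
    + by apply: (@ovp_A d w _ (n' - k' - 1) (d - s + 1) d0 Hw); nia.
    + by apply: (@ovp_A d w _ (n' - k' - 1) (d - s) d0 Hw); nia.
    + by apply: (@ovp_A d w _ (2 * n' - k' - 1) (d - s - 1) d0 Hw); nia.
  - by rewrite !mulf_neq0 ?fact_neq0 ?(w1_neq0 Hw) ?(Nw_neq0 Hw) //; lia.
  - split; lia.
have HN : exists eN vN, ovp d w (Num n k) eN vN /\
    (4 * n' - 2 * k' - 2 <= eN)%N /\ ((2 * s + 1 <= d)%N -> (4 * n' - 2 * k' - 1 <= eN)%N).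
  case: (leqP (2 * s + 1) d) => Hs.
    eexists; eexists; split; last split.
    - eapply ovp_Num.
      + by apply: (@ovp_nd d w 1 0 1 Hw); lia.
      + by apply: (@ovp_A d w _ n' 0 d0 Hw); nia.
      + by apply: (@ovp_A d w _ (3 * n' - 2 * k' - 1) (d - 2 * s - 1) d0 Hw); nia.
    - lia.
    - lia.
  eexists; eexists; split; last split.
  - eapply ovp_Num.
    + by apply: (@ovp_nd d w 1 0 1 Hw); lia.
    + by apply: (@ovp_A d w _ n' 0 d0 Hw); nia.
    + by apply: (@ovp_A d w _ (3 * n' - 2 * k' - 2) (2 * d - 2 * s - 1) d0 Hw); nia.
  - lia.
  - lia.
case: HD => eD [vD [HD [vD0 [HD1 HD2]]]].
case: HN => eN [vN [HN [HN1 HN2]]].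
have lt : (eD < eN)%N.
  case: (ltnP s 2) => Hs; last by have := HD2 Hs; lia.
  by have := HN2 ltac:(lia); lia.
have := final Hw Hk HN HD vD0 (ltnW lt).
by have -> : (eD == eN) = false by apply/eqP; lia.
Qed.
Theorem lemma2p1 (n k d : nat) (w : algC) :
  (1 <= n)%N -> (1 <= k <= n)%N -> (0 < d)%N -> (d %| n)%N ->
  d.-primitive_root w ->
  [/\ (d = 1%N -> value_at (fq n k) w (fN n k)),
      ((2 <= d)%N -> (d %| k)%N ->
        value_at (fq n k) w (((n %/ d - k %/ d + 1)%N)%:R * fN (n %/ d) (k %/ d))),
      (d = 2%N -> odd k ->
        value_at (fq n k) w
          (('C(n %/ 2, (k + 1) %/ 2 - 1))%:R *
           ('C(3 * (n %/ 2) - 2 * ((k + 1) %/ 2), n %/ 2 - (k + 1) %/ 2))%:R))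
    & (d <> 1%N -> ~ ((2 <= d)%N /\ (d %| k)%N) -> ~ (d = 2%N /\ odd k) ->
        value_at (fq n k) w 0)].
Proof.
move=> n1 Hk d0 dn Hw; split.
- by move=> d1; subst d; apply: case1.
- by move=> d2 dk; apply: case2.
- by move=> d2; subst d; apply: case3.
- move=> d1 H2 H3.
  have d2 : (2 <= d)%N by lia.
  have ndk : ~~ (d %| k)%N by apply/negP => dk; apply: H2.
  have d3 : (3 <= d)%N.
    case: (ltnP 2 d) => // Hd; have d2' : d = 2%N by lia.
    by exfalso; apply: H3; split => //; move: ndk; rewrite d2' dvdn2 negbK.
  exact: (case4 n1 Hk d3 dn ndk Hw).
Qed.
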